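(* Let $\bm{Q}$ be the $m\times m$ transition rate matrix ($Q_{ij}\ge 0$ for $i\ne j$, $Q_{ii}=-\sum_{j\ne i}Q_{ij}$) of an irreducible, reversible continuous-time Markov chain with (elementwise positive) stationary distribution $\bm{\pi}_\infty$, so that $(\bm{\pi}_\infty)_iQ_{ij}=(\bm{\pi}_\infty)_jQ_{ji}$ for all $i,j$. For row vectors $\bm{p},\bm{q}\in\mathbb{R}^m$ define $\langle\bm{p},\bm{q}\rangle_{\bm{\pi}_\infty}=\sum_i (\bm{p})_i(\bm{q})_i/(\bm{\pi}_\infty)_i$, $\|\bm{p}\|^2_{\bm{\pi}_\infty}=\langle\bm{p},\bm{p}\rangle_{\bm{\pi}_\infty}$, and $\Phi^-(\bm{p})=-\tfrac12\langle\bm{p}\bm{Q},\bm{p}\rangle_{\bm{\pi}_\infty}$. Given $\bm{p}_{k-1}^{+}\in\Delta^{m-1}$ and a step size $\lambda>0$, let $$\bm{p}_k^{-}(\lambda)=\underset{\bm{p}\in\Delta^{m-1}}{\arg\inf}\;\tfrac12\|\bm{p}-\bm{p}_{k-1}^{+}\|^2_{\bm{\pi}_\infty}+\lambda\Phi^-(\bm{p}).$$ Then $\bm{p}_k^{-}(\lambda)$ is a $\lambda$-approximate prior: it coincides with the exact prior propagation $\bm{p}_{k-1}^{+}\exp(\lambda\bm{Q})$ (the solution at time $\lambda$ of $\dot{\bm{\pi}}^-=\bm{\pi}^-\bm{Q}$ started at $\bm{p}_{k-1}^+$) up to $o(\lambda)$ as $\lambda\downarrow0$.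
   Context: $\Delta^{m-1}=\{\bm{\pi}\in\mathbb{R}^m_{\ge 0}:\bm{\pi}\mathbf{1}=1\}$ is the probability simplex of row vectors ($\mathbf{1}$ the column vector of ones). In the filtering setting, $\bm{p}_{k-1}^+$ is the approximate posterior at time $(k-1)\lambda$ and $\bm{p}_k^-$ is the approximate prior at time $k\lambda$. *)

(* Defs.v *)
From HB Require Import structures.
From mathcomp Require Import all_boot all_order all_algebra.
From mathcomp Require Import all_classical all_reals all_analysis.
Set Implicit Arguments. Unset Strict Implicit. Unset Printing Implicit Defensive.
Import Order.TTheory GRing.Theory Num.Theory.
Import numFieldNormedType.Exports.
Local Open Scope ring_scope.

Section Defs.
Variable R : realType.
Variable m : nat.

Definition rate_matrix (Q : 'M[R]_m) : Prop :=
  (forall i j : 'I_m, i != j -> 0 <= Q i j) /\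
  (forall i : 'I_m, Q i i = - \sum_(j < m | j != i) Q i j).

Definition irreducible (Q : 'M[R]_m) : Prop :=
  forall i j : 'I_m, connect (fun a b : 'I_m => 0 < Q a b) i j.

Definition simplex (p : 'rV[R]_m) : Prop :=
  (forall i, 0 <= p 0 i) /\ \sum_(i < m) p 0 i = 1.

Definition stationary_dist (Q : 'M[R]_m) (pi : 'rV[R]_m) : Prop :=
  simplex pi /\ (forall i, 0 < pi 0 i) /\ pi *m Q = 0.

Definition reversible (Q : 'M[R]_m) (pi : 'rV[R]_m) : Prop :=
  forall i j : 'I_m, pi 0 i * Q i j = pi 0 j * Q j i.

Definition ipi (pi p q : 'rV[R]_m) : R := \sum_(i < m) p 0 i * q 0 i / pi 0 i.
Definition normpi2 (pi p : 'rV[R]_m) : R := ipi pi p p.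

Definition Phim (Q : 'M[R]_m) (pi p : 'rV[R]_m) : R := - (ipi pi (p *m Q) p) / 2.

Definition prox_obj (Q : 'M[R]_m) (pi pplus : 'rV[R]_m) (lam : R) (p : 'rV[R]_m) : R :=
  normpi2 pi (p - pplus) / 2 + lam * Phim Q pi p.

Definition is_prox_argmin (Q : 'M[R]_m) (pi pplus : 'rV[R]_m) (lam : R) (p : 'rV[R]_m) : Prop :=
  simplex p /\ forall q, simplex q -> prox_obj Q pi pplus lam p <= prox_obj Q pi pplus lam q.

End Defs.

(* Main.v *)
Set Warnings "-all".
Require Import Defs.
From HB Require Import structures.
From mathcomp Require Import all_boot all_order all_algebra.
From mathcomp Require Import all_classical all_reals all_analysis.
From mathcomp Require Import ring lra.
Import Order.TTheory GRing.Theory Num.Theory.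
Import numFieldNormedType.Exports.
Local Open Scope ring_scope.
Local Open Scope classical_set_scope.

Set Implicit Arguments.
Section Aux.
Variable R : realType.
Variable m : nat.
Variable pi : 'rV[R]_m.
Hypothesis pipos : forall i, 0 < pi 0 i.

Lemma pine0 i : pi 0 i != 0.
Proof. exact: lt0r_neq0. Qed.

Lemma ipiDl p1 p2 q : ipi pi (p1 + p2) q = ipi pi p1 q + ipi pi p2 q.
Proof. rewrite /ipi -big_split /=; apply: eq_bigr => i _; rewrite !mxE; ring. Qed.
Lemma ipiZl c p q : ipi pi (c *: p) q = c * ipi pi p q.
Proof. rewrite /ipi mulr_sumr; apply: eq_bigr => i _; rewrite !mxE; ring. Qed.
Lemma ipiC p q : ipi pi p q = ipi pi q p.
Proof. rewrite /ipi; apply: eq_bigr => i _; ring. Qed.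
Lemma ipiDr p q1 q2 : ipi pi p (q1 + q2) = ipi pi p q1 + ipi pi p q2.
Proof. by rewrite ipiC ipiDl !(ipiC _ p). Qed.
Lemma ipiZr c p q : ipi pi p (c *: q) = c * ipi pi p q.
Proof. by rewrite ipiC ipiZl ipiC. Qed.

Lemma ipiQC (Q : 'M[R]_m) (hrev : reversible Q pi) u v :
  ipi pi (u *m Q) v = ipi pi (v *m Q) u.
Proof.
rewrite /ipi.
under eq_bigr do rewrite mxE !big_distrl /=.
under [RHS]eq_bigr do rewrite mxE !big_distrl /=.
rewrite [RHS]exchange_big /=.
apply: eq_bigr => i _; apply: eq_bigr => j _.
have e : Q j i = pi 0 i * Q i j / pi 0 j.
  by rewrite hrev; field; exact: pine0.
rewrite e; field; apply/andP; split; exact: pine0.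
Qed.

Lemma expand1 u d : ipi pi (u + d) (u + d) = ipi pi u u + 2 * ipi pi u d + ipi pi d d.
Proof. rewrite !ipiDl !ipiDr (ipiC d u); ring. Qed.

Lemma expand2 (Q : 'M[R]_m) (hrev : reversible Q pi) q d :
  ipi pi ((q + d) *m Q) (q + d) = ipi pi (q *m Q) q + 2 * ipi pi (q *m Q) d + ipi pi (d *m Q) d.
Proof. rewrite mulmxDl !ipiDl !ipiDr (ipiQC hrev d q); ring. Qed.

Lemma rowsum0 (Q : 'M[R]_m) (hQ : rate_matrix Q) i : \sum_j Q i j = 0.
Proof. by rewrite (bigD1 i) //= {1}(proj2 hQ i) addNr. Qed.

Lemma Gneg (Q : 'M[R]_m) (hQ : rate_matrix Q) (hs : pi *m Q = 0) d :
  ipi pi (d *m Q) d <= 0.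
Proof.
have cs : forall j, \sum_i pi 0 i * Q i j = 0.
  move=> j; have := congr1 (fun M : 'rV[R]_m => M 0 j) hs.
  by rewrite /= !mxE.
have H0 : 0 <= \sum_i \sum_j pi 0 i * Q i j * (d 0 i / pi 0 i - d 0 j / pi 0 j) ^+ 2.
  apply: sumr_ge0 => i _; apply: sumr_ge0 => j _.
  have [->|ij] := eqVneq i j; first by rewrite subrr expr0n /= mulr0.
  apply: mulr_ge0; last exact: sqr_ge0.
  apply: mulr_ge0; [exact: ltW | exact: (proj1 hQ)].
have E : \sum_i \sum_j pi 0 i * Q i j * (d 0 i / pi 0 i - d 0 j / pi 0 j) ^+ 2
  = \sum_i \sum_j (pi 0 i * (d 0 i / pi 0 i) ^+ 2) * Q i j
  + \sum_i \sum_j (d 0 j / pi 0 j) ^+ 2 * (pi 0 i * Q i j)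
  + (-2) * \sum_i \sum_j (pi 0 i * (d 0 i / pi 0 i) * Q i j * (d 0 j / pi 0 j)).
  rewrite mulr_sumr -!big_split /=; apply: eq_bigr => i _.
  rewrite mulr_sumr -!big_split /=; apply: eq_bigr => j _; ring.
have A : \sum_i \sum_j (pi 0 i * (d 0 i / pi 0 i) ^+ 2) * Q i j = 0.
  by apply: big1 => i _; rewrite -mulr_sumr rowsum0 // mulr0.
have B : \sum_i \sum_j (d 0 j / pi 0 j) ^+ 2 * (pi 0 i * Q i j) = 0.
  by rewrite exchange_big /=; apply: big1 => j _; rewrite -mulr_sumr cs mulr0.
have C : ipi pi (d *m Q) d
   = \sum_i \sum_j (pi 0 i * (d 0 i / pi 0 i) * Q i j * (d 0 j / pi 0 j)).
  rewrite /ipi.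
  under eq_bigr do rewrite mxE !big_distrl /=.
  rewrite exchange_big /=; apply: eq_bigr => i _; apply: eq_bigr => j _.
  field; apply/andP; split; exact: pine0.
rewrite E A B in H0; rewrite C; lra.
Qed.

Lemma amgm b d c :
  2 * c * ipi pi b d <= 2 * c ^+ 2 * normpi2 pi b + normpi2 pi d / 2.
Proof.
rewrite /normpi2 /ipi !mulr_sumr mulr_suml -big_split /=.
apply: ler_sum => i _.
rewrite -subr_ge0.
have -> : 2 * c ^+ 2 * (b 0 i * b 0 i / pi 0 i) + d 0 i * d 0 i / pi 0 i / 2 -
  2 * c * (b 0 i * d 0 i / pi 0 i) = (2 * c * b 0 i - d 0 i) ^+ 2 / (2 * pi 0 i).
  field; exact: pine0.
apply: divr_ge0; first exact: sqr_ge0.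
by apply: mulr_ge0 => //; exact: ltW.
Qed.

Lemma sq_le_norm (d : 'rV[R]_m) (hs : \sum_i pi 0 i = 1) i : d 0 i ^+ 2 <= normpi2 pi d.
Proof.
have pi1 : pi 0 i <= 1.
  rewrite -hs (bigD1 i) //= lerDl; apply: sumr_ge0 => j _; exact: ltW.
have t : d 0 i * d 0 i / pi 0 i <= normpi2 pi d.
  rewrite /normpi2 /ipi (bigD1 i) //= lerDl; apply: sumr_ge0 => j _.
  by rewrite divr_ge0 ?(ltW (pipos _)) // -expr2 sqr_ge0.
apply: le_trans t.
have -> : d 0 i ^+ 2 = d 0 i * d 0 i / pi 0 i * pi 0 i.
  by field; exact: pine0.
rewrite -[X in _ <= X]mulr1; apply: ler_wpM2l => //.
by rewrite divr_ge0 ?(ltW (pipos _)) // -expr2 sqr_ge0.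
Qed.

End Aux.
Unset Implicit Arguments.


Lemma dnbhs_right (R : realType) (P : R -> Prop) :
  (\forall t \near 0^', P t) -> \forall t \near 0^'+, P t.
Proof.
move=> /nbhs_ballP [_ /posnumP[r] hr]; exists r%:num => //= y ry y0.
by apply: hr => //; rewrite gt_eqF.
Qed.

Lemma small_entry (R : realType) (t Nb e y : R) : 0 < t -> 0 <= Nb -> 0 < e ->
  t * (4 * (Nb + 1)) <= e -> y ^+ 2 <= 4 * (t ^+ 2) ^+ 2 * Nb -> `|t^-1 * y| <= e.
Proof.
move=> t0 Nb0 e0 te hy.
have h1 : 4 * (t ^+ 2) ^+ 2 * Nb <= (e * t) ^+ 2.
  have a1 : 4 * t * Nb <= e.
    have : 4 * t * Nb <= t * (4 * (Nb + 1)) by nra.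
    lra.
  have a2 : 0 <= 4 * t * Nb by apply: mulr_ge0 => //; apply: mulr_ge0 => //; lra.
  have a3 : (4 * t * Nb) * (4 * t * Nb) <= e * e by apply: ler_pM => //.
  have a4 : 4 * t ^+ 2 * Nb <= e ^+ 2.
    have : 4 * t ^+ 2 * Nb <= t * (4 * (Nb + 1)) * t by nra.
    have : t * (4 * (Nb + 1)) * t <= e * e by nra.
    rewrite expr2; lra.
  have -> : 4 * (t ^+ 2) ^+ 2 * Nb = (4 * t ^+ 2 * Nb) * t ^+ 2 by ring.
  rewrite exprMn; apply: ler_wpM2r => //; exact: sqr_ge0.
have h2 : `|y| <= e * t.
  rewrite -[e * t]ger0_norm; last by apply: mulr_ge0; exact: ltW.
  rewrite -ler_sqr ?normr_ge0 // !real_normK ?num_real //; lra.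
rewrite normrM gtr0_norm ?invr_gt0 //.
rewrite ler_pdivrMl //; lra.
Qed.

Theorem theorem3 (R : realType) (m : nat) (Q : 'M[R]_m) (piinf pplus : 'rV[R]_m)
  (hQ : rate_matrix Q) (hirr : irreducible Q)
  (hstat : stationary_dist Q piinf) (hrev : reversible Q piinf)
  (hp : simplex pplus)
  (pminus : R -> 'rV[R]_m)
  (hmin : forall lam : R, 0 < lam -> is_prox_argmin Q piinf pplus lam (pminus lam))
  (piexact : R -> 'rV[R]_m)
  (h0 : piexact 0 = pplus)
  (hode : forall t : R, is_derive t 1 piexact (piexact t *m Q)) :
  (fun lam : R => lam^-1 *: (pminus lam - piexact lam)) @ 0^'+ --> (0 : 'rV[R]_m).
Proof.
have pipos := proj1 (proj2 hstat).
have pisum := proj2 (proj1 hstat).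
set a := pplus *m Q.
set b := a *m Q.
set K := \sum_i `|Q i i|.
have QK : forall i, - Q i i <= K.
  move=> i; apply: (le_trans (ler_norm _)); rewrite normrN /K (bigD1 i) //= lerDl.
  by apply: sumr_ge0 => j _; exact: normr_ge0.
have K0 : 0 <= K by rewrite /K; apply: sumr_ge0 => j _; exact: normr_ge0.
set Nb := normpi2 piinf b.
have Nb0 : 0 <= Nb.
  by rewrite /Nb /normpi2 /ipi; apply: sumr_ge0 => j _; rewrite divr_ge0 ?(ltW (pipos _)) // -expr2 sqr_ge0.
have qsimp : forall lam, 0 < lam -> lam * K <= 1 -> simplex (pplus + lam *: a).
  move=> lam l0 lK; split.
    move=> i; rewrite !mxE (bigD1 i) //=.
    have S0 : 0 <= \sum_(j < m | j != i) pplus 0 j * Q j i.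
      apply: sumr_ge0 => j ji; apply: mulr_ge0; first exact: (proj1 hp).
      exact: (proj1 hQ).
    have h1 : lam * (- Q i i) <= lam * K by apply: ler_wpM2l => //; exact: ltW.
    have h2 : 0 <= 1 + lam * Q i i by lra.
    have h3 : 0 <= pplus 0 i * (1 + lam * Q i i) by apply: mulr_ge0 => //; exact: (proj1 hp).
    have h4 : 0 <= lam * \sum_(j < m | j != i) pplus 0 j * Q j i by apply: mulr_ge0 => //; exact: ltW.
    nra.
  under eq_bigr do rewrite !mxE.
  rewrite big_split /= (proj2 hp) -mulr_sumr exchange_big /=.
  rewrite big1 ?mulr0 ?addr0 // => j _.
  by rewrite -mulr_sumr rowsum0 // mulr0.
have key : forall lam, 0 < lam -> lam * K <= 1 ->
    forall i, (pminus lam - (pplus + lam *: a)) 0 i ^+ 2 <= 4 * (lam ^+ 2) ^+ 2 * Nb.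
  move=> lam l0 lK i.
  have [_ hm] := hmin lam l0.
  have := hm _ (qsimp lam l0 lK).
  set q := pplus + lam *: a.
  set d := pminus lam - q.
  have -> : pminus lam = q + d by rewrite /d addrC subrK.
  rewrite /prox_obj /Phim /normpi2.
  have -> : q + d - pplus = lam *: a + d by apply/rowP => j; rewrite !mxE; ring.
  have -> : q - pplus = lam *: a by apply/rowP => j; rewrite !mxE; ring.
  have qQ : q *m Q = a + lam *: b by rewrite /q mulmxDl -scalemxAl.
  clearbody q d.
  rewrite expand1 (expand2 pipos hrev) qQ.
  rewrite !ipiDl !ipiZl.
  have G := Gneg pipos hQ (proj2 (proj2 hstat)) d.
  have G' : 0 <= lam * - ipi piinf (d *m Q) d by apply: mulr_ge0; [exact: ltW | lra].
  have A := @amgm _ _ _ pipos b d (lam ^+ 2).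
  rewrite -/Nb in A.
  have S := @sq_le_norm _ _ _ pipos d pisum i.
  move=> H.
  have H2 : normpi2 piinf d / 2 <= lam ^+ 2 * ipi piinf b d.
    rewrite /normpi2; nra.
  lra.
have hder : (fun h : R => h^-1 *: (piexact h - pplus)) @ 0^' --> a.
  have [hd hv] := hode 0.
  rewrite h0 in hv.
  have E : (fun h : R => h^-1 *: (piexact h - pplus)) =
     (fun h => h^-1 *: ((piexact \o shift 0) (h *: 1) - piexact 0)).
    apply/funext => h /=; rewrite h0 addr0; congr (_ *: (piexact _ - _)).
    by rewrite /GRing.scale /= mulr1.
  rewrite E; have -> : a = derive piexact 0 1 by rewrite hv.
  exact: hd.
have hd0 : (fun h : R => h^-1 *: (piexact h - pplus) - a) @ 0^' --> (0 : 'rV[R]_m).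
  have H := cvgB hder (cvg_cst a); rewrite subrr in H; exact: H.
move/cvgr0Pnorm_le: hd0 => hd.
apply/cvgr0Pnorm_le => e e0.
have e2 : 0 < e / 2 by rewrite divr_gt0.
have D := @dnbhs_right R _ (hd _ e2).
have c0 : 0 < (e / 2) / (4 * (Nb + 1)) by rewrite divr_gt0 // mulr_gt0 //; lra.
have cK : 0 < (K + 1)^-1 by rewrite invr_gt0; lra.
near=> t.
have t0 : 0 < t by near: t; exact: nbhs_right_gt.
have tc : t < (e / 2) / (4 * (Nb + 1)) by near: t; exact: nbhs_right_lt.
have tK : t < (K + 1)^-1 by near: t; exact: nbhs_right_lt.
have Dt : `|t^-1 *: (piexact t - pplus) - a| <= e / 2 by near: t; exact: D.
have tK' : t * K <= 1.
  have Kp : 0 < K + 1 by lra.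
  have : (K + 1) * (K + 1)^-1 = 1 by rewrite mulfV // lt0r_neq0.
  nra.
have tc' : t * (4 * (Nb + 1)) <= e / 2.
  have : (e / 2) / (4 * (Nb + 1)) * (4 * (Nb + 1)) = e / 2.
    by rewrite mulfVK // lt0r_neq0 // mulr_gt0 //; lra.
  nra.
have -> : t^-1 *: (pminus t - piexact t) =
   t^-1 *: (pminus t - (pplus + t *: a)) - (t^-1 *: (piexact t - pplus) - a).
  apply/rowP => j; rewrite !mxE; field; exact: lt0r_neq0.
apply: le_trans (ler_normB _ _) _.
suff : `|t^-1 *: (pminus t - (pplus + t *: a))| <= e / 2 by lra.
have nE : forall M : 'rV[R]_m, `|M| = \big[Num.max/0]_ij `|M ij.1 ij.2|.
  by move=> M; rewrite -mx_normrE.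
rewrite nE; apply: bigmax_le; first lra.
case=> i j _ /=; rewrite (ord1 i).
have := key t t0 tK' j.
move: (pminus t - (pplus + t *: a)) => M hM.
rewrite mxE; exact: (@small_entry _ _ _ _ _ t0 Nb0 e2 tc' hM).

Unshelve. all: by end_near.
Qed.
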